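(* Suppose $(A,B,K,\tilde\Theta)$ with $\tilde\Theta\in\mathbb{S}_+^{n_x}$ satisfies $$(A+BK)^\top\tilde\Theta(A+BK)-\tilde\Theta+\tilde Q+K^\top\tilde RK\prec0. \quad (\mathrm{D})$$ Consider the LMI in the variables $(\mathbf A,\mathbf B,\mathbf K,\tilde{\mathbf\Theta})$: $$\begin{bmatrix} \mathbf I & \mathbf 0 & \mathbf 0 & -\mathbf B^\top & \mathbf K\\ * & \tilde Q^{-1} & \mathbf 0 & \mathbf 0 & \mathbf I\\ * & * & \tilde R^{-1} & \mathbf 0 & \mathbf K\\ * & * & * & \mathcal{L}^{\mathbf I,\tilde\Theta}_{\mathbf I,\tilde{\mathbf\Theta}}+\mathcal{L}^{B^\top,\mathbf I}_{\mathbf B^\top,\mathbf I} & \mathbf A\\ * & * & * & * & \tilde{\mathbf\Theta}+\mathcal{L}^{K,\mathbf I}_{\mathbf K,\mathbf I} \end{bmatrix}\succ0.$$ Then (a) it is satisfied by $(A,B,K,\tilde\Theta)$; and (b) every solution with $\tilde{\mathbf\Theta}\in\mathbb{S}_+^{n_x}$ satisfies (D) with $(A,B,K,\tilde\Theta)$ replaced by $(\mathbf A,\mathbf B,\mathbf K,\tilde{\mathbf\Theta})$.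
   Context: $A\in\mathbb{R}^{n_x\times n_x}$, $B\in\mathbb{R}^{n_x\times n_u}$, $K\in\mathbb{R}^{n_u\times n_x}$ (bold versions same sizes); $\tilde Q\in\mathbb{S}_+^{n_x}$, $\tilde R\in\mathbb{S}_+^{n_u}$ are fixed. $\mathbb{S}_+^m$ is the set of $m\times m$ symmetric positive definite matrices; $\succ0$ ($\prec0$) means symmetric positive (negative) definite; $*$ denotes symmetric blocks; the first diagonal $\mathbf I$ is $n_u\times n_u$ and the $\mathbf I$ in row 2 is $n_x\times n_x$. For $\mathbf L,L\in\mathbb{R}^{m\times n}$ and symmetric invertible $\mathbf D,D\in\mathbb{R}^{m\times m}$, $\mathcal{L}^{L,D}_{\mathbf L,\mathbf D}:=\mathbf L^\top D^{-1}L+L^\top D^{-1}\mathbf L-L^\top D^{-1}\mathbf DD^{-1}L$. *)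

(* Defs.v *)
From HB Require Import structures.
From mathcomp Require Import all_boot all_order all_algebra.
From mathcomp Require Import reals.
Set Implicit Arguments. Unset Strict Implicit. Unset Printing Implicit Defensive.
Import Order.TTheory GRing.Theory Num.Theory.
Local Open Scope ring_scope.

Definition posdef (R : realType) (n : nat) (M : 'M[R]_n) : Prop :=
  M^T = M /\ forall x : 'cV[R]_n, x != 0 -> 0 < (x^T *m M *m x) 0 0.

Definition negdef (R : realType) (n : nat) (M : 'M[R]_n) : Prop :=
  M^T = M /\ forall x : 'cV[R]_n, x != 0 -> (x^T *m M *m x) 0 0 < 0.

(* Lcal L D Lb Db  =  \mathcal{L}^{L,D}_{Lb,Db}
   := Lb^T D^{-1} L + L^T D^{-1} Lb - L^T D^{-1} Db D^{-1} L *)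
Definition Lcal (R : realType) (m n : nat) (L : 'M[R]_(m, n)) (D : 'M[R]_m)
    (Lb : 'M[R]_(m, n)) (Db : 'M[R]_m) : 'M[R]_n :=
  Lb^T *m invmx D *m L + L^T *m invmx D *m Lb
  - L^T *m invmx D *m Db *m invmx D *m L.

Definition symblock2 (R : realType) (p q : nat) (P : 'M[R]_p) (C : 'M[R]_(p, q))
  (S : 'M[R]_q) : 'M[R]_(p + q) := block_mx P C C^T S.

(* Nominal data (A,B,K,Th) are the linearization points, bold variables
   (Ab,Bb,Kb,Thb) are the LMI unknowns; Qt, Rt are the fixed weights. *)
Definition LMI (R : realType) (nx nu : nat)
    (Qt : 'M[R]_nx) (Rt : 'M[R]_nu)
    (A : 'M[R]_nx) (B : 'M[R]_(nx, nu)) (K : 'M[R]_(nu, nx)) (Th : 'M[R]_nx)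
    (Ab : 'M[R]_nx) (Bb : 'M[R]_(nx, nu)) (Kb : 'M[R]_(nu, nx)) (Thb : 'M[R]_nx)
    : 'M[R]_(nu + nx + nu + nx + nx) :=
  let D11 : 'M[R]_nu := 1%:M in
  let D22 : 'M[R]_nx := invmx Qt in
  let D33 : 'M[R]_nu := invmx Rt in
  let D44 : 'M[R]_nx :=
    Lcal (1%:M : 'M[R]_nx) Th (1%:M : 'M[R]_nx) Thb
    + Lcal B^T (1%:M : 'M[R]_nu) Bb^T (1%:M : 'M[R]_nu) in
  let D55 : 'M[R]_nx := Thb + Lcal K (1%:M : 'M[R]_nu) Kb (1%:M : 'M[R]_nu) in
  let C2 : 'M[R]_(nu, nx) := 0 in
  let C3 : 'M[R]_(nu + nx, nu) := col_mx (0 : 'M[R]_(nu, nu)) (0 : 'M[R]_(nx, nu)) in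
  let C4 : 'M[R]_(nu + nx + nu, nx) :=
    col_mx (col_mx (- Bb^T) (0 : 'M[R]_(nx, nx))) (0 : 'M[R]_(nu, nx)) in
  let C5 : 'M[R]_(nu + nx + nu + nx, nx) :=
    col_mx (col_mx (col_mx Kb (1%:M : 'M[R]_nx)) Kb) Ab in
  symblock2 (symblock2 (symblock2 (symblock2 D11 C2 D22) C3 D33) C4 D44) C5 D55.

Definition Dmat (R : realType) (nx nu : nat) (Qt : 'M[R]_nx) (Rt : 'M[R]_nu)
    (A : 'M[R]_nx) (B : 'M[R]_(nx, nu)) (K : 'M[R]_(nu, nx)) (Th : 'M[R]_nx)
    : 'M[R]_nx :=
  (A + B *m K)^T *m Th *m (A + B *m K) - Th + Qt + K^T *m Rt *m K.

(* Main.v *)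
Require Import Defs.
From HB Require Import structures.
From mathcomp Require Import all_boot all_order all_algebra.
From mathcomp Require Import reals.
From mathcomp Require Import ring lra.
Set Implicit Arguments. Unset Strict Implicit. Unset Printing Implicit Defensive.
Import Order.TTheory GRing.Theory Num.Theory.
Local Open Scope ring_scope.

Section H.
Variable R : realType.

Lemma posdef_unit n (P : 'M[R]_n) : posdef P -> P \in unitmx.
Proof.
case=> _ HP; rewrite unitmxE unitfE; apply/negP => /det0P [v v0 vP].
have := HP v^T; rewrite trmx_eq0 v0 => /(_ isT).
by rewrite trmxK vP mul0mx mxE ltxx.
Qed.

Lemma posdef_ge0 n (P : 'M[R]_n) (z : 'cV[R]_n) : posdef P -> 0 <= (z^T *m P *m z) 0 0.
Proof.
case=> _ HP; have [->|nz] := eqVneq z 0; first by rewrite mulmx0 mxE.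
exact/ltW/HP.
Qed.

Lemma posdef_eq0 n (P : 'M[R]_n) (z : 'cV[R]_n) : posdef P -> (z^T *m P *m z) 0 0 = 0 -> z = 0.
Proof.
case=> _ HP E; apply/eqP; apply/negPn/negP => nz.
by have := HP z nz; rewrite E ltxx.
Qed.

Lemma posdef_inv n (P : 'M[R]_n) : posdef P -> posdef (invmx P).
Proof.
move=> hP; have U := posdef_unit hP; case: hP => PT HP; split.
  by rewrite trmx_inv PT.
move=> z nz; set w := invmx P *m z.
have zE : z = P *m w by rewrite /w mulmxA mulmxV // mul1mx.
have wnz : w != 0 by apply: contraNneq nz => w0; rewrite zE w0 mulmx0.
clearbody w; subst z.
rewrite trmx_mul PT !mulmxA mulmxK //; exact: HP.
Qed.

Lemma posdef1 n : posdef (1%:M : 'M[R]_n).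
Proof.
split; first by rewrite trmx1.
move=> z nz; rewrite mulmx1 mxE.
have H : forall i, true -> 0 <= z^T 0 i * z i 0.
  by move=> i _; rewrite mxE; apply: mulr_ge0_le0 || (rewrite -expr2; exact: sqr_ge0).
rewrite lt_def sumr_ge0 // andbT; apply: contra nz => /eqP/psumr_eq0P => /(_ H) Z.
apply/eqP/matrixP => i j; rewrite ord1 mxE.
have := Z i isT; rewrite mxE => /eqP; rewrite mulf_eq0 orbb => /eqP //.
Qed.

End H.

Section Q.
Variable R : realType.

Lemma trD m n (A B : 'M[R]_(m,n)) : (A + B)^T = A^T + B^T.
Proof. exact: linearD. Qed.
Lemma trN m n (A : 'M[R]_(m,n)) : (- A)^T = - A^T.
Proof. exact: linearN. Qed.
Lemma eD m n (A B : 'M[R]_(m,n)) i j : (A + B) i j = A i j + B i j.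
Proof. by rewrite mxE. Qed.
Lemma eN m n (A : 'M[R]_(m,n)) i j : (- A) i j = - A i j.
Proof. by rewrite mxE. Qed.

Lemma qa nx nu (Qt : 'M[R]_nx) (Rt : 'M[R]_nu)
    (A : 'M[R]_nx) (B : 'M[R]_(nx, nu)) (K : 'M[R]_(nu, nx)) (Th : 'M[R]_nx)
    u1 u2 u3 y x :
  Qt^T = Qt -> Rt^T = Rt -> Th^T = Th ->
  Qt \in unitmx -> Rt \in unitmx -> Th \in unitmx ->
  let v : 'cV[R]_(nu + nx + nu + nx + nx) :=
     col_mx (col_mx (col_mx (col_mx u1 u2) u3) y) x in
  (v^T *m LMI Qt Rt A B K Th A B K Th *m v) 0 0 =
  ((u1 - B^T *m y + K *m x)^T *m (u1 - B^T *m y + K *m x)) 0 0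
  + ((u2 + Qt *m x)^T *m invmx Qt *m (u2 + Qt *m x)) 0 0
  + ((u3 + Rt *m K *m x)^T *m invmx Rt *m (u3 + Rt *m K *m x)) 0 0
  + ((y + Th *m (A + B *m K) *m x)^T *m invmx Th *m (y + Th *m (A + B *m K) *m x)) 0 0
  - (x^T *m Dmat Qt Rt A B K Th *m x) 0 0.
Proof.
move=> QT RT ThT QU RU ThU v; rewrite /v /LMI /symblock2 /Lcal /Dmat.
rewrite !(tr_col_mx, mul_row_block, mul_row_col, mul_mx_row, add_row_mx).
rewrite !(mulmxDl, mulmxDr, mulmxN, mulNmx, mulmx0, mul0mx, mulmx1, mul1mx,
  trD, trN, trmx_mul, trmxK, trmx1, trmx0, invmx1, mulmxA, addr0, add0r, trmx_inv, QT, RT, ThT, oppr0).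
rewrite !(mulmxK QU, mulmxK RU, mulmxK ThU, mulmxKV QU, mulmxKV RU, mulmxKV ThU).
rewrite !(eD, eN).
ring.
Qed.

Lemma qb nx nu (Qt : 'M[R]_nx) (Rt : 'M[R]_nu)
    (A : 'M[R]_nx) (B : 'M[R]_(nx, nu)) (K : 'M[R]_(nu, nx)) (Th : 'M[R]_nx)
    (Ac : 'M[R]_nx) (Bb : 'M[R]_(nx, nu)) (Kb : 'M[R]_(nu, nx)) (Thb : 'M[R]_nx) :
  Qt^T = Qt -> Rt^T = Rt -> Th^T = Th -> Thb^T = Thb ->
  Qt \in unitmx -> Rt \in unitmx ->
  let L4 := - (Thb *m Ac) in
  let L : 'M[R]_(nu + nx + nu + nx + nx, nx) :=
    col_mx (col_mx (col_mx (col_mx (Bb^T *m L4 - Kb) (- Qt)) (- (Rt *m Kb))) L4) 1%:M in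
  let G := (Bb - B)^T *m Thb *m Ac in
  let W := Ac - invmx Th *m Thb *m Ac in
  L^T *m LMI Qt Rt A B K Th (Ac - Bb *m Kb) Bb Kb Thb *m L =
  - Dmat Qt Rt (Ac - Bb *m Kb) Bb Kb Thb - (Kb - K)^T *m (Kb - K) - G^T *m G - W^T *m Thb *m W.
Proof.
move=> QT RT ThT ThbT QU RU L4 L G W.
rewrite /L /G /W /L4 /LMI /symblock2 /Lcal /Dmat subrK.
rewrite !(tr_col_mx, mul_row_block, mul_row_col, mul_mx_row, add_row_mx).
rewrite !(mulmxDl, mulmxDr, mulmxN, mulNmx, mulmx0, mul0mx, mulmx1, mul1mx,
  trD, trN, trmx_mul, trmxK, trmx1, trmx0, invmx1, mulmxA, addr0, add0r, trmx_inv, QT, RT, ThT, ThbT, oppr0).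
rewrite !(mulmxK QU, mulmxK RU, mulmxKV QU, mulmxKV RU).
apply/matrixP => i j; rewrite !(eD, eN).
ring.
Qed.
End Q.

Section M.
Variable R : realType.

Lemma symblock2_tr p q (P : 'M[R]_p) (C : 'M[R]_(p, q)) S :
  P^T = P -> S^T = S -> (symblock2 P C S)^T = symblock2 P C S.
Proof. by move=> PT ST; rewrite /symblock2 tr_block_mx trmxK PT ST. Qed.

Lemma Lcal_tr m n (L : 'M[R]_(m, n)) D Lb Db :
  D^T = D -> Db^T = Db -> (Lcal L D Lb Db)^T = Lcal L D Lb Db.
Proof.
move=> DT DbT; rewrite /Lcal !trD !trN !trmx_mul !trmxK trmx_inv DT DbT !mulmxA.
by congr (_ - _); rewrite addrC.
Qed.

Lemma LMI_tr nx nu (Qt : 'M[R]_nx) (Rt : 'M[R]_nu) A B K Th Ab Bb Kb Thb :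
  Qt^T = Qt -> Rt^T = Rt -> Th^T = Th -> Thb^T = Thb ->
  (LMI Qt Rt A B K Th Ab Bb Kb Thb)^T = LMI Qt Rt A B K Th Ab Bb Kb Thb.
Proof.
move=> QT RT ThT ThbT; rewrite /LMI.
rewrite !symblock2_tr ?trmx1 ?trmx_inv ?QT ?RT //.
  by rewrite trD !Lcal_tr ?trmx1.
by rewrite trD ThbT Lcal_tr ?trmx1.
Qed.

Lemma Dmat_tr nx nu (Qt : 'M[R]_nx) (Rt : 'M[R]_nu) A B K Th :
  Qt^T = Qt -> Rt^T = Rt -> Th^T = Th -> (Dmat Qt Rt A B K Th)^T = Dmat Qt Rt A B K Th.
Proof.
move=> QT RT ThT; rewrite /Dmat !trD !trN !trmx_mul !trmxK QT RT ThT !mulmxA !trD !trmx_mul !trmxK //.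
Qed.

Lemma sq_ge0 n (z : 'cV[R]_n) : 0 <= (z^T *m z) 0 0.
Proof. by have := posdef_ge0 z (posdef1 R n); rewrite mulmx1. Qed.

Lemma sq_eq0 n (z : 'cV[R]_n) : (z^T *m z) 0 0 = 0 -> z = 0.
Proof. by move=> H; apply: (@posdef_eq0 R n 1%:M z (posdef1 R n)); rewrite mulmx1. Qed.

Lemma quadB n (x : 'cV[R]_n) (X Y : 'M[R]_n) :
  (x^T *m (X - Y) *m x) 0 0 = (x^T *m X *m x) 0 0 - (x^T *m Y *m x) 0 0.
Proof. by rewrite mulmxBr mulmxBl eD eN. Qed.
Lemma quadN n (x : 'cV[R]_n) (X : 'M[R]_n) :
  (x^T *m (- X) *m x) 0 0 = - (x^T *m X *m x) 0 0.
Proof. by rewrite mulmxN mulNmx eN. Qed.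
Lemma quadTT n m (x : 'cV[R]_n) (Y : 'M[R]_(m, n)) :
  (x^T *m (Y^T *m Y) *m x) 0 0 = ((Y *m x)^T *m (Y *m x)) 0 0.
Proof. by rewrite trmx_mul !mulmxA. Qed.
Lemma quadTZT n m (x : 'cV[R]_n) (Y : 'M[R]_(m, n)) Z :
  (x^T *m (Y^T *m Z *m Y) *m x) 0 0 = ((Y *m x)^T *m Z *m (Y *m x)) 0 0.
Proof. by rewrite trmx_mul !mulmxA. Qed.

End M.

Theorem theorem3 (R : realType) (nx nu : nat)
    (Qt : 'M[R]_nx) (Rt : 'M[R]_nu)
    (A : 'M[R]_nx) (B : 'M[R]_(nx, nu)) (K : 'M[R]_(nu, nx)) (Th : 'M[R]_nx) :
  posdef Qt -> posdef Rt -> posdef Th ->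
  negdef (Dmat Qt Rt A B K Th) ->
  posdef (LMI Qt Rt A B K Th A B K Th) /\
  (forall (Ab : 'M[R]_nx) (Bb : 'M[R]_(nx, nu)) (Kb : 'M[R]_(nu, nx))
          (Thb : 'M[R]_nx),
     posdef Thb ->
     posdef (LMI Qt Rt A B K Th Ab Bb Kb Thb) ->
     negdef (Dmat Qt Rt Ab Bb Kb Thb)).
Proof.
move=> hQ hR hTh [DT HD].
have QU := posdef_unit hQ; have RU := posdef_unit hR; have ThU := posdef_unit hTh.
have hQi := posdef_inv hQ; have hRi := posdef_inv hR; have hThi := posdef_inv hTh.
have QT := hQ.1; have RT := hR.1; have ThT := hTh.1.
split.
  split; first exact: LMI_tr.
  move=> v nz.
  have [u1 [u2 [u3 [y [x vE]]]]] : exists u1 u2 u3 y x,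
      v = col_mx (col_mx (col_mx (col_mx u1 u2) u3) y) x.
    exists (usubmx (usubmx (usubmx (usubmx v)))), (dsubmx (usubmx (usubmx (usubmx v)))),
      (dsubmx (usubmx (usubmx v))), (dsubmx (usubmx v)), (dsubmx v).
    by rewrite !vsubmxK.
  subst v; rewrite qa //.
  set w1 := u1 - _ + _; set w2 := u2 + _; set w3 := u3 + _; set w4 := y + _.
  have g1 := sq_ge0 w1; have g2 := posdef_ge0 w2 hQi.
  have g3 := posdef_ge0 w3 hRi; have g4 := posdef_ge0 w4 hThi.
  have [x0|xnz] := eqVneq x 0; last first.
    have := HD x xnz; lra.
  have z0 : (0 : 'M[R]_1) 0 0 = 0 by rewrite mxE.
  rewrite x0 mulmx0 z0 subr0.
  rewrite ltNge; apply/negP => Hle.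
  have e4 : w4 = 0 by apply: posdef_eq0 hThi _; lra.
  have e3 : w3 = 0 by apply: posdef_eq0 hRi _; lra.
  have e2 : w2 = 0 by apply: posdef_eq0 hQi _; lra.
  have e1 : w1 = 0 by apply: sq_eq0; lra.
  move: e4 e3 e2 e1; rewrite /w1 /w2 /w3 /w4 x0 !mulmx0 !addr0 => y0 u30 u20.
  rewrite y0 mulmx0 subr0 => u10.
  by move: nz; rewrite u10 u20 u30 y0 x0 !col_mx0 eqxx.
move=> Ab Bb Kb Thb hThb [MT HM].
have ThbT := hThb.1.
split; first exact: Dmat_tr.
move=> x xnz.
set Ac := Ab + Bb *m Kb.
have AbE : Ab = Ac - Bb *m Kb by rewrite /Ac addrK.
clearbody Ac; subst Ab.
pose L4 := - (Thb *m Ac).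
pose L : 'M[R]_(nu + nx + nu + nx + nx, nx) :=
    col_mx (col_mx (col_mx (col_mx (Bb^T *m L4 - Kb) (- Qt)) (- (Rt *m Kb))) L4) 1%:M.
have Lnz : L *m x != 0.
  by rewrite /L mul_col_mx mul1mx col_mx_eq0 negb_and xnz orbT.
have H := HM _ Lnz.
have E : (L *m x)^T *m LMI Qt Rt A B K Th (Ac - Bb *m Kb) Bb Kb Thb *m (L *m x)
   = x^T *m (L^T *m LMI Qt Rt A B K Th (Ac - Bb *m Kb) Bb Kb Thb *m L) *m x.
  by rewrite trmx_mul !mulmxA.
rewrite E (@qb R nx nu Qt Rt A B K Th Ac Bb Kb Thb QT RT ThT ThbT QU RU) in H.
move: H.
rewrite !quadB quadN !quadTT !quadTZT.
have g1 := sq_ge0 ((Kb - K) *m x).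
have g2 := sq_ge0 (((Bb - B)^T *m Thb *m Ac) *m x).
have g3 := posdef_ge0 ((Ac - invmx Th *m Thb *m Ac) *m x) hThb.
lra.
Qed.
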